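(* Let $J_0$ be a two-sided $p$-periodic Jacobi matrix with discriminant $\Delta_{J_0}$ and isospectral torus $\mathcal{T}_{J_0}$. Let $J$ be a two-sided (not a priori periodic) Jacobi matrix. Then $\Delta_{J_0}(J)=S^p+S^{-p}$ if and only if $J\in\mathcal{T}_{J_0}$, where $S$ is the right shift on $\ell^2(\mathbb{Z})$.
   Context: A two-sided Jacobi matrix is the bounded tridiagonal operator on $\ell^2(\mathbb{Z})$ with $J_{nn}=b_n\in\mathbb{R}$, $J_{n,n+1}=J_{n+1,n}=a_n>0$ ($\{a_n,b_n\}$ bounded). $J_0$ is $p$-periodic if its parameters are $p$-periodic. Its discriminant is the polynomial $\Delta_{J_0}(x)=\mathrm{Tr}(\Lambda_p(x)\cdots\Lambda_1(x))$, $\Lambda_n(x)=\frac1{a^{(0)}_n}\begin{pmatrix}x-b^{(0)}_n&-1\\(a^{(0)}_n)^2&0\end{pmatrix}$, of degree $p$; $\Delta_{J_0}(J)$ is this polynomial applied to the operator $J$. The isospectral torus $\mathcal{T}_{J_0}$ is the set of two-sided $p$-periodic Jacobi matrices whose discriminant equals $\Delta_{J_0}$ (equivalently, with the same spectrum as $J_0$). The right shift is $(Su)_n=u_{n-1}$. *)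

(* Defs.v *)
From HB Require Import structures.
From mathcomp Require Import all_boot all_order all_algebra.
From mathcomp Require Import reals.
Set Implicit Arguments. Unset Strict Implicit. Unset Printing Implicit Defensive.
Import Order.TTheory GRing.Theory Num.Theory.
Local Open Scope ring_scope.

(* A two-sided Jacobi matrix is given by its parameters a b : int -> R,
   J_{nn} = b n, J_{n,n+1} = J_{n+1,n} = a n > 0, {a_n, b_n} bounded. *)
Definition jacobi (R : realType) (a b : int -> R) : Prop :=
  (forall n, 0 < a n) /\ (exists M : R, forall n, `|a n| <= M /\ `|b n| <= M).

Definition periodic (R : realType) (p : nat) (a b : int -> R) : Prop :=
  forall n : int, a (n + p%:Z) = a n /\ b (n + p%:Z) = b n.

Definition Lambda (R : realType) (a b : int -> R) (n : int)
  : 'M[{poly R}]_2 :=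
  (a n)^-1%:P *: \matrix_(i < 2, j < 2)
     (if i == 0 then (if j == 0 then 'X - (b n)%:P else -1)
      else (if j == 0 then (a n ^+ 2)%:P else 0)).

Fixpoint monodromy (R : realType) (a b : int -> R) (k : nat)
  : 'M[{poly R}]_2 :=
  match k with
  | 0 => 1%:M
  | k'.+1 => Lambda a b (k'.+1)%:Z *m monodromy a b k'
  end.

Definition discriminant (R : realType) (p : nat) (a b : int -> R)
  : {poly R} := \tr (monodromy a b p).

Definition jac_apply (R : realType) (a b : int -> R) (u : int -> R)
  : int -> R :=
  fun n => a (n - 1) * u (n - 1) + b n * u n + a n * u (n + 1).

Definition jac_pow (R : realType) (a b : int -> R) (k : nat)
  (u : int -> R) : int -> R := iter k (jac_apply a b) u.

Definition poly_apply (R : realType) (a b : int -> R) (P : {poly R})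
  (u : int -> R) : int -> R :=
  fun n => \sum_(i < size P) P`_i * jac_pow a b i u n.

Definition shift_pow (R : realType) (k : int) (u : int -> R) : int -> R :=
  fun n => u (n - k).

Definition l2 (R : realType) (u : int -> R) : Prop :=
  exists M : R, forall N : nat,
    \sum_(i < (N.*2).+1) u (i%:Z - N%:Z) ^+ 2 <= M.

Definition iso_torus (R : realType) (p : nat) (a0 b0 a b : int -> R)
  : Prop :=
  jacobi a b /\ periodic p a b /\ discriminant p a b = discriminant p a0 b0.

(* Main.v *)
Require Import Defs.
From HB Require Import structures.
From mathcomp Require Import all_boot all_order all_algebra.
From mathcomp Require Import reals.
From mathcomp Require Import ring lra zify.
From Stdlib Require Import FunctionalExtensionality.
Set Implicit Arguments. Unset Strict Implicit. Unset Printing Implicit Defensive.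
Import Order.TTheory GRing.Theory Num.Theory.
Local Open Scope ring_scope.

Lemma ord2P (i : 'I_2) : i = 0 \/ i = 1.
Proof. by case: i => [[|[|//]] ?]; [left|right]; apply: val_inj. Qed.

Lemma mul2E (K : comNzRingType) (A B : 'M[K]_2) i j :
  (A *m B) i j = A i 0 * B 0 j + A i 1 * B 1 j.
Proof.
rewrite mxE !big_ord_recl big_ord0 addr0.
by have -> : lift ord0 ord0 = 1 :> 'I_2 by apply: val_inj.
Qed.

Lemma tr2E (K : comNzRingType) (A : 'M[K]_2) : \tr A = A 0 0 + A 1 1.
Proof.
rewrite /mxtrace !big_ord_recl big_ord0 addr0.
by have -> : lift ord0 ord0 = 1 :> 'I_2 by apply: val_inj.
Qed.

Definition det2 (K : comNzRingType) (A : 'M[K]_2) := A 0 0 * A 1 1 - A 0 1 * A 1 0.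
Definition adj2 (K : comNzRingType) (A : 'M[K]_2) : 'M[K]_2 :=
  \matrix_(i, j) (if i == 0 then (if j == 0 then A 1 1 else - A 0 1)
                  else (if j == 0 then - A 1 0 else A 0 0)).

Lemma det2M (K : comNzRingType) (A B : 'M[K]_2) : det2 (A *m B) = det2 A * det2 B.
Proof. rewrite /det2 !mul2E; ring. Qed.

Lemma adj2K (K : comNzRingType) (A : 'M[K]_2) : adj2 A *m A = det2 A *: 1%:M.
Proof.
apply/matrixP => i j; rewrite mul2E !mxE /det2.
by case: (ord2P i) => ->; case: (ord2P j) => -> /=; ring.
Qed.

Lemma adj2_tr (K : comNzRingType) (A : 'M[K]_2) : A + adj2 A = (\tr A)%:M.
Proof.
apply/matrixP => i j; rewrite !mxE tr2E.
by case: (ord2P i) => ->; case: (ord2P j) => -> /=; ring.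
Qed.
Section PA.
Variables (R : realType) (a b : int -> R).
Local Notation pa := (poly_apply a b).
Local Notation J := (jac_apply a b).

Lemma pa_widen N (P : {poly R}) u n : (size P <= N)%N ->
  pa P u n = \sum_(i < N) P`_i * jac_pow a b i u n.
Proof.
move=> H; rewrite /poly_apply (big_ord_widen N (fun i => P`_i * jac_pow a b i u n) H).
rewrite big_mkcond /=; apply: eq_bigr => i _; case: ifP => // /negbT.
by rewrite -leqNgt => hi; rewrite nth_default // mul0r.
Qed.

Lemma paD P Q u n : pa (P + Q) u n = pa P u n + pa Q u n.
Proof.
set N := maxn (size P) (size Q).
rewrite (@pa_widen N (P + Q)); last by apply: (leq_trans (size_polyD _ _)).
rewrite (@pa_widen N P) ?leq_maxl // (@pa_widen N Q) ?leq_maxr //.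
by rewrite -big_split /=; apply: eq_bigr => i _; rewrite coefD mulrDl.
Qed.

Lemma paN P u n : pa (- P) u n = - pa P u n.
Proof.
rewrite (@pa_widen (size P) (- P)) ?size_polyN // /poly_apply -sumrN.
by apply: eq_bigr => i _; rewrite coefN mulNr.
Qed.

Lemma paB P Q u n : pa (P - Q) u n = pa P u n - pa Q u n.
Proof. by rewrite paD paN. Qed.

Lemma paCM c P u n : pa (c%:P * P) u n = c * pa P u n.
Proof.
rewrite (@pa_widen (size P) (c%:P * P)); last first.
  apply: (leq_trans (size_polyMleq _ _)); move: (size_polyC_leq1 c).
  by case: (size c%:P) => [|[|]] //= _; rewrite ?add0n ?add1n //; case: (size P).
rewrite /poly_apply mulr_sumr; apply: eq_bigr => i _; by rewrite coefCM mulrA.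
Qed.

Lemma paC c u n : pa (c%:P) u n = c * u n.
Proof.
rewrite (@pa_widen 1 (c%:P)) ?size_polyC_leq1 // big_ord1 coefC /=.
by [].
Qed.

Lemma pa0 u n : pa 0 u n = 0.
Proof. by rewrite /poly_apply size_poly0 big_ord0. Qed.

Lemma paXM P u n : pa ('X * P) u n = pa P (J u) n.
Proof.
rewrite (@pa_widen (size P).+1 ('X * P)); last first.
  apply: (leq_trans (size_polyMleq _ _)); by rewrite size_polyX.
rewrite big_ord_recl coefXM /= mul0r add0r /poly_apply.
apply: eq_bigr => i _; rewrite coefXM /=.
by rewrite /jac_pow add0n -iterS iterSr.
Qed.

End PA.

Section Mono.
Variables (R : realType) (a b : int -> R).
Hypothesis anz : forall n, a n != 0.
Local Notation pa := (poly_apply a b).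
Local Notation J := (jac_apply a b).
Local Notation L := (Lambda a b).

Definition Lb (m : int) : 'M[{poly R}]_2 :=
  (a m)^-1%:P *: \matrix_(i < 2, j < 2)
     (if i == 0 then (if j == 0 then 0 else 1)
      else (if j == 0 then - (a m ^+ 2)%:P else 'X - (b m)%:P)).

Fixpoint mono (n : int) (k : nat) : 'M[{poly R}]_2 :=
  match k with 0 => 1%:M | k'.+1 => L (n + k'%:Z) *m mono n k' end.

Fixpoint back (n : int) (k : nat) : 'M[{poly R}]_2 :=
  match k with 0 => 1%:M | k'.+1 => Lb (n - k'.+1%:Z) *m back n k' end.

Lemma CA1 m : (a m)^-1%:P * (a m)%:P = 1 :> {poly R}.
Proof. by rewrite -polyCM mulVf. Qed.

Lemma LbL m : Lb m *m L m = 1%:M.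
Proof.
have h := CA1 m.
apply/matrixP => i j; rewrite mul2E !mxE polyC_exp.
set C := (a m)^-1%:P in h *; set A := (a m)%:P in h *.
case: (ord2P i) => ->; case: (ord2P j) => -> /=;
  first [ring | (transitivity ((C*A)^+2); [ring | by rewrite h expr1n])].
Qed.

Lemma detL m : det2 (L m) = 1.
Proof.
have h := CA1 m.
rewrite /det2 !mxE polyC_exp /=.
set C := (a m)^-1%:P in h *; set A := (a m)%:P in h *.
transitivity ((C*A)^+2); [ring | by rewrite h expr1n].
Qed.

Lemma det2_1 : det2 (1%:M : 'M[{poly R}]_2) = 1.
Proof. by rewrite /det2 !mxE /= mulr1 mulr0 subr0. Qed.

Lemma det_mono n k : det2 (mono n k) = 1.
Proof. by elim: k => [|k IH] /=; rewrite ?det2_1 // det2M IH detL mulr1. Qed.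

Lemma back_peel N k : back N k.+1 = back (N - 1) k *m Lb (N - 1).
Proof.
elim: k => [|k IH] /=; first by rewrite mul1mx mulmx1; congr Lb; lia.
rewrite [in LHS]/= in IH; rewrite IH mulmxA; congr (Lb _ *m _ *m _); lia.
Qed.

Lemma back_mono n k : back (n + k%:Z) k *m mono n k = 1%:M.
Proof.
elim: k n => [|k IH] n; first by rewrite /= mulmx1.
rewrite back_peel [mono _ k.+1]/= -mulmxA (mulmxA (Lb _)).
have -> : n + k.+1%:Z - 1 = n + k%:Z by lia.
by rewrite LbL mul1mx IH.
Qed.

Lemma mono_peel n k : mono n k.+1 = mono (n + 1) k *m L n.
Proof.
elim: k => [|k IH] /=; first by rewrite mul1mx mulmx1 addr0.
rewrite [in LHS]/= in IH; rewrite IH mulmxA; congr (L _ *m _ *m _); lia.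
Qed.


Definition rep (q : (int -> R) -> 'I_2 -> R) (G : 'M[{poly R}]_2) n :=
  forall u i, q u i = pa (G i 0) u n + pa (G i 1) u (n - 1).

Lemma rep_fwd q q' G n m : rep q G n ->
  (forall u, q' u 0 = (a m)^-1 * (q (J u) 0 - b m * q u 0) - (a m)^-1 * q u 1) ->
  (forall u, q' u 1 = a m * q u 0) -> rep q' (L m *m G) n.
Proof.
move=> Hq H0 H1 u i; rewrite !mul2E !mxE.
case: (ord2P i) => -> /=.
  rewrite H0 !Hq -!mulrA !paD !paCM !mulrBl !paB !paXM !paCM !mulN1r !paN; ring.
rewrite H1 !Hq !mulr0 !mul0r !addr0 -!mulrA !paCM expr2 !mulrA mulVf ?anz // !mul1r; ring.
Qed.

Lemma rep_bwd q q' G n m : rep q G n ->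
  (forall u, q' u 0 = (a m)^-1 * q u 1) ->
  (forall u, q' u 1 = - a m * q u 0 + (a m)^-1 * (q (J u) 1 - b m * q u 1)) ->
  rep q' (Lb m *m G) n.
Proof.
move=> Hq H0 H1 u i; rewrite !mul2E !mxE.
case: (ord2P i) => -> /=.
  rewrite H0 !Hq !mulr0 !mul0r !add0r !mulr1 !paCM; ring.
rewrite H1 !Hq -!mulrA !paD !paCM !mulrBl !paB !paXM !paCM !mulNr !paN !paCM.
rewrite !mulrN !mulrA mulVf ?anz // !mul1r; ring.
Qed.


Definition G0 n : 'M[{poly R}]_2 := \matrix_(i < 2, j < 2)
  (if i == 0 then (if j == 0 then 1 else 0) else (if j == 0 then 0 else (a (n - 1))%:P)).

Definition qf n (k : nat) u (i : 'I_2) :=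
  if i == 0 then u (n + k%:Z) else a (n + k%:Z - 1) * u (n + k%:Z - 1).
Definition qb n (k : nat) u (i : 'I_2) :=
  if i == 0 then u (n - k%:Z) else a (n - k%:Z - 1) * u (n - k%:Z - 1).

Lemma rep0 n : rep (qf n 0) (G0 n) n.
Proof.
move=> u i; rewrite /qf !mxE addr0; case: (ord2P i) => -> /=.
  by rewrite paC pa0 mul1r addr0.
by rewrite paC pa0 add0r.
Qed.

Lemma repF n k : rep (qf n k) (mono n k *m G0 n) n.
Proof.
elim: k => [|k IH]; first by rewrite /= mul1mx; exact: rep0.
rewrite /= -mulmxA; apply: (rep_fwd (m := n + k%:Z) IH) => u.
  rewrite /qf /= /jac_apply.
  have -> : n + k.+1%:Z = n + k%:Z + 1 by lia.
  by rewrite -[LHS]mul1r -{1}(mulVf (anz (n + k%:Z))); ring.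
rewrite /qf /=; congr (a _ * u _); lia.
Qed.

Lemma repB n k : rep (qb n k) (back n k *m G0 n) n.
Proof.
elim: k => [|k IH]; first by move=> u i; rewrite /= mul1mx -(rep0 n u i) /qb /qf !subr0 ?addr0.
rewrite /= -mulmxA; apply: (rep_bwd (m := n - k.+1%:Z) IH) => u.
  rewrite /qb /=.
  have -> : n - k%:Z - 1 = n - k.+1%:Z by lia.
  by rewrite mulrA mulVf ?anz // mul1r.
rewrite /qb /= /jac_apply.
have -> : n - k%:Z - 1 = n - k.+1%:Z by lia.
have -> : n - k%:Z = n - k.+1%:Z + 1 by lia.
have hx := anz (n - k.+1%:Z); field; exact: hx.
Qed.


Lemma mono_monodromy k : monodromy a b k = mono 1 k.
Proof.
elim: k => [|k IH] //=; rewrite IH; congr (L _ *m _); lia.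
Qed.

Section Per.
Variable p : nat.
Hypothesis per : periodic p a b.

Lemma L_per m : L (m + p%:Z) = L m.
Proof. by rewrite /Lambda; case: (per m) => -> ->. Qed.

Lemma Lb_per m : Lb (m + p%:Z) = Lb m.
Proof. by rewrite /Lb; case: (per m) => -> ->. Qed.

Lemma back_per N k : back (N + p%:Z) k = back N k.
Proof.
elim: k => [|k IH] //=; rewrite IH.
have -> : N + p%:Z - k.+1%:Z = (N - k.+1%:Z) + p%:Z by lia.
by rewrite Lb_per.
Qed.

Lemma LLb m : L m *m Lb m = 1%:M.
Proof. exact: mulmx1C (LbL m). Qed.

Lemma tr_shift n : \tr (mono (n + 1) p) = \tr (mono n p).
Proof.
have e : L n *m mono n p = mono (n + 1) p *m L n.
  by rewrite -mono_peel /= L_per.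
rewrite -[mono (n + 1) p]mulmx1 -(LLb n) mulmxA -e -mulmxA mxtrace_mulC.
by rewrite -mulmxA LbL mulmx1.
Qed.

Lemma tr_const n : \tr (mono n p) = \tr (mono 1 p).
Proof.
have hpos : forall k : nat, \tr (mono k%:Z p) = \tr (mono 0 p).
  elim=> [|k IH] //; rewrite -IH -(tr_shift k%:Z); congr (\tr (mono _ _)); lia.
have hneg : forall k : nat, \tr (mono (- k%:Z) p) = \tr (mono 0 p).
  elim=> [|k IH]; first by rewrite oppr0.
  rewrite -IH -(tr_shift (- k.+1%:Z)); congr (\tr (mono _ _)); lia.
rewrite (hpos 1%N); case: n => k; first exact: hpos.
by rewrite NegzE hneg.
Qed.

Lemma dirA u n : pa (discriminant p a b) u n = u (n - p%:Z) + u (n + p%:Z).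
Proof.
set T := mono n p; set T' := back n p.
have hTT : T' *m T = 1%:M by rewrite /T' -back_per back_mono.
have hadj : adj2 T = T'.
  by rewrite -[adj2 T]mulmx1 -(mulmx1C hTT) mulmxA adj2K det_mono scale1r mul1mx.
have hsum : T' + T = (\tr T)%:M by rewrite -hadj addrC adj2_tr.
have E0 := repF n p u 0; have E1 := repB n p u 0.
rewrite /qf /qb /= in E0 E1.
have hM : T' *m G0 n + T *m G0 n = (\tr T) *: G0 n by rewrite -mulmxDl hsum mul_scalar_mx.
have h00 := congr1 (fun M : 'M[{poly R}]_2 => M 0 0) hM.
have h01 := congr1 (fun M : 'M[{poly R}]_2 => M 0 1) hM.
rewrite [LHS]mxE [RHS]mxE /= in h00; rewrite [LHS]mxE [RHS]mxE /= in h01.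
rewrite E0 E1 addrACA -!paD h00 h01.
by rewrite !mxE /= mulr1 mulr0 pa0 addr0 /discriminant mono_monodromy -(tr_const n).
Qed.

End Per.
End Mono.

Section Entries.
Variables (R : realType) (a b : int -> R).
Local Notation pa := (poly_apply a b).
Local Notation J := (jac_apply a b).

Definition delta (m : int) : int -> R := fun n => if n == m then 1 else 0.

Lemma jpS k u : jac_pow a b k.+1 u = J (jac_pow a b k u).
Proof. by []. Qed.

Lemma f_zero m k n : n < m - k%:Z -> jac_pow a b k (delta m) n = 0.
Proof.
elim: k n => [|k IH] n hn.
  rewrite /= /delta; case: eqP => // e; lia.
rewrite jpS /jac_apply !IH ?mulr0 ?addr0 //; lia.
Qed.

Lemma prod_shift (F : int -> R) c k :
  \prod_(j < k.+1) F (c + j%:Z) = F c * \prod_(j < k) F (c + 1 + j%:Z).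
Proof.
rewrite big_ord_recl addr0; congr (_ * _); apply: eq_bigr => j _.
congr F; change (c + (j.+1)%:Z = c + 1 + j%:Z); lia.
Qed.

Lemma sum_shift (F : int -> R) c k :
  \sum_(j < k.+1) F (c + j%:Z) = F c + \sum_(j < k) F (c + 1 + j%:Z).
Proof.
rewrite big_ord_recl addr0; congr (_ + _); apply: eq_bigr => j _.
congr F; change (c + (j.+1)%:Z = c + 1 + j%:Z); lia.
Qed.

Lemma f_top m k : jac_pow a b k (delta m) (m - k%:Z) = \prod_(j < k) a (m - k%:Z + j%:Z).
Proof.
elim: k => [|k IH].
  by rewrite big_ord0 /= /delta subr0 eqxx.
rewrite jpS /jac_apply (f_zero (n := m - k.+1%:Z - 1)); last by lia.
rewrite (f_zero (n := m - k.+1%:Z)); last by lia.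
rewrite mulr0 add0r mulr0 add0r prod_shift.
have -> : m - k.+1%:Z + 1 = m - k%:Z by lia.
by rewrite IH.
Qed.

Lemma f_sub m k : jac_pow a b k.+1 (delta m) (m - k%:Z) =
  (\prod_(j < k) a (m - k%:Z + j%:Z)) * \sum_(j < k.+1) b (m - k%:Z + j%:Z).
Proof.
elim: k => [|k IH].
  rewrite big_ord0 big_ord1 jpS /jac_apply /= /delta subr0 addr0 eqxx.
  have -> : (m - 1 == m) = false by apply/negbTE/eqP; lia.
  have -> : (m + 1 == m) = false by apply/negbTE/eqP; lia.
  by rewrite !mulr0 mulr1 add0r addr0 mul1r.
rewrite jpS /jac_apply (f_zero (k := k.+1)); last by lia.
rewrite (f_top m k.+1) !prod_shift sum_shift.
have -> : m - k.+1%:Z + 1 = m - k%:Z by lia.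
rewrite IH; ring.
Qed.

Lemma l2_delta m : l2 (delta m).
Proof.
exists 1 => N.
suff H : forall K (c : int), \sum_(i < K) delta m (i%:Z - c) ^+ 2 =
   if (0 <= m + c) && (m + c < K%:Z) then 1 else 0.
  by rewrite H; case: ifP.
move=> K c; elim: K => [|K IH].
  rewrite big_ord0; case: ifP => // /andP [h1 h2]; lia.
rewrite big_ord_recr /= IH /delta.
case: (boolP (K%:Z - c == m)) => /eqP h1;
case: (boolP ((0 <= m + c) && (m + c < K%:Z))) => /andP h2;
case: (boolP ((0 <= m + c) && (m + c < K.+1%:Z))) => /andP h3;
rewrite ?expr1n ?expr0n ?addr0 ?add0r //=; exfalso; lia.
Qed.

End Entries.
Arguments delta {R}.
Arguments l2_delta {R}.

Lemma size_Ce (R : realType) (c : R) (e : {poly R}) k :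
  (size e <= k.+1)%N -> (size (c%:P * e)%R <= k.+1)%N.
Proof.
move=> h; apply: (leq_trans (size_polyMleq _ _)); move: (size_polyC_leq1 c).
case: (size c%:P) => [|[|]] //= _; rewrite ?add0n ?add1n //.
by apply: leq_trans h; apply: leq_pred.
Qed.

Lemma size_L (R : realType) (a b : int -> R) m i j : (size (Lambda a b m i j) <= 2)%N.
Proof.
rewrite !mxE; apply: size_Ce.
case: (ord2P i) => ->; case: (ord2P j) => -> /=.
- by rewrite size_XsubC.
- by rewrite size_polyN size_poly1.
- exact: leq_trans (size_polyC_leq1 _) _.
- by rewrite size_poly0.
Qed.

Lemma size_mono (R : realType) (a b : int -> R) k i j :
  (size (monodromy a b k i j) <= k.+1)%N.
Proof.
elim: k i j => [|k IH] i j.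
  by rewrite /= mxE; case: (i == j); rewrite ?size_poly1 ?size_poly0.
rewrite /= mul2E; apply: (leq_trans (size_polyD _ _)); rewrite geq_max.
apply/andP; split; apply: (leq_trans (size_polyMleq _ _));
  move: (size_L a b k.+1%:Z i 0) (size_L a b k.+1%:Z i 1) (IH 0 j) (IH 1 j) => h1 h2 h3 h4.
  by rewrite -subn1 leq_subLR (leq_trans (leq_add h1 h3)).
by rewrite -subn1 leq_subLR (leq_trans (leq_add h2 h4)).
Qed.

Lemma size_disc (R : realType) (a b : int -> R) p :
  (size (discriminant p a b) <= p.+1)%N.
Proof.
rewrite /discriminant tr2E; apply: (leq_trans (size_polyD _ _)).
by rewrite geq_max !size_mono.
Qed.

Lemma f_top' (R : realType) (a b : int -> R) m k n : n = m - k%:Z ->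
  jac_pow a b k (delta m) n = \prod_(j < k) a (n + j%:Z).
Proof. by move=> ->; exact: f_top. Qed.

Lemma f_sub' (R : realType) (a b : int -> R) m k n : n = m - k%:Z ->
  jac_pow a b k.+1 (delta m) n =
  (\prod_(j < k) a (n + j%:Z)) * \sum_(j < k.+1) b (n + j%:Z).
Proof. by move=> ->; exact: f_sub. Qed.


Unset Implicit Arguments.

Theorem theorem3p1 (R : realType) (p : nat) (a0 b0 a b : int -> R) :
  (0 < p)%N -> jacobi a0 b0 -> periodic p a0 b0 -> jacobi a b ->
  ((forall u : int -> R, l2 u ->
      poly_apply a b (discriminant p a0 b0) u =
      (fun n => shift_pow p%:Z u n + shift_pow (- p%:Z) u n))
   <-> iso_torus p a0 b0 a b).
Proof.
move=> hp _ _ hj; have [apos _] := hj.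
have anz : forall n, a n != 0 by move=> n; rewrite gt_eqF ?apos.
split; last first.
  move=> [_ [hper hdisc]] u _; apply: functional_extensionality => n.
  by rewrite -hdisc (dirA anz hper) /shift_pow opprK.
move=> H; case: p hp H => [//|k] _ H; set D := discriminant k.+1 a0 b0.
have HD : forall m n, poly_apply a b D (delta m) n = delta m (n - k.+1%:Z) + delta m (n + k.+1%:Z).
  move=> m n; have := congr1 (fun f => f n) (H _ (l2_delta m)).
  by rewrite /shift_pow opprK.
have hs : (size D <= k.+2)%N := size_disc a0 b0 k.+1.
have S1 : forall c, D`_k.+1 * \prod_(j < k.+1) a (c + j%:Z) = 1.
  move=> c; have := HD (c + k.+1%:Z) c.
  rewrite (pa_widen _ _ _ _ hs) big_ord_recr /= -?jpS big1 ?add0r; last first.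
    move=> i _; rewrite f_zero ?mulr0 //; have := ltn_ord i; lia.
  rewrite (@f_top' R a b (c + k.+1%:Z) (k.+1) (c)); last by lia.
  rewrite /delta; case: eqP => [?|_]; first lia.
  by case: eqP => [_|?]; last lia; rewrite add0r.
have S2 : forall c, D`_k * \prod_(j < k) a (c + j%:Z) +
    D`_k.+1 * (\prod_(j < k) a (c + j%:Z) * \sum_(j < k.+1) b (c + j%:Z)) = 0.
  move=> c; have := HD (c + k%:Z) c.
  rewrite (pa_widen _ _ _ _ hs) big_ord_recr big_ord_recr /= -?jpS big1 ?add0r; last first.
    move=> i _; rewrite f_zero ?mulr0 //; have := ltn_ord i; lia.
  rewrite (@f_top' R a b (c + k%:Z) (k) (c)); last by lia.
  rewrite (@f_sub' R a b (c + k%:Z) (k) (c)); last by lia.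
  rewrite /delta; case: eqP => [?|_]; first lia.
  by case: eqP => [?|_]; first lia; rewrite addr0.
have Dnz : D`_k.+1 != 0.
  apply/eqP => h0; have := S1 0; rewrite h0 mul0r => /eqP; by rewrite eq_sym oner_eq0.
have Qpos : forall c, 0 < \prod_(j < k) a (c + j%:Z).
  by move=> c; apply: prodr_gt0 => j _; exact: apos.
have hper : periodic k.+1 a b.
  move=> c; split.
    have h1 := S1 c; have h2 := S1 (c + 1).
    rewrite prod_shift in h1; rewrite big_ord_recr /= in h2.
    set X := \prod_(j < k) _ in h1; set Y := \prod_(j < k) _ in h2.
    have eXY : X = Y by rewrite /X /Y; apply: eq_bigr => j _.
    rewrite -eXY in h2.
    have -> : c + k.+1%:Z = c + 1 + k%:Z by lia.
    symmetry.
    transitivity (a c * (D`_k.+1 * (X * a (c + 1 + k%:Z)))); first by rewrite h2 mulr1.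
    transitivity ((D`_k.+1 * (a c * X)) * a (c + 1 + k%:Z)); first by ring.
    by rewrite h1 mul1r.
  have hT : forall c, D`_k + D`_k.+1 * \sum_(j < k.+1) b (c + j%:Z) = 0.
    move=> x; have : \prod_(j < k) a (x + j%:Z) *
        (D`_k + D`_k.+1 * \sum_(j < k.+1) b (x + j%:Z)) = 0.
      by rewrite -[RHS](S2 x); ring.
    by move/eqP; rewrite mulf_eq0 gt_eqF ?Qpos //= => /eqP.
  have e : D`_k + D`_k.+1 * \sum_(j < k.+1) b (c + j%:Z) =
     D`_k + D`_k.+1 * \sum_(j < k.+1) b (c + 1 + j%:Z) by rewrite (hT c) (hT (c + 1)).
  move: (addrI _ e) => /(mulfI Dnz).
  rewrite sum_shift big_ord_recr /=.
  have -> : c + k.+1%:Z = c + 1 + k%:Z by lia.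
  by move=> h; lra.
split; first exact: hj.
split; first exact: hper.
set Q := discriminant k.+1 a b - D.
have hQ : forall m n, poly_apply a b Q (delta m) n = 0.
  by move=> m n; rewrite paB (dirA anz hper) HD subrr.
case: (eqVneq Q 0) => hQ0; first by move/eqP: hQ0; rewrite subr_eq0 => /eqP.
exfalso.
set d := (size Q).-1.
have hsz : (size Q <= d.+1)%N by rewrite /d; case: (size Q).
have := hQ d%:Z 0.
rewrite (pa_widen _ _ _ _ hsz) big_ord_recr /= -?jpS big1 ?add0r; last first.
  move=> i _; rewrite f_zero ?mulr0 //; have := ltn_ord i; lia.
rewrite (@f_top' R a b (d%:Z) (d) (0)); last by lia.
move/eqP; rewrite mulf_eq0 => /orP [h|h].
  by move: h; rewrite /d -lead_coefE lead_coef_eq0 (negbTE hQ0).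
have hp : 0 < \prod_(j < d) a (0 + j%:Z) by apply: prodr_gt0 => j _; exact: apos.
by move: h; rewrite gt_eqF.
Qed.
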